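(* Let $\Sigma=\{a_1,\dots,a_n\}$ be an alphabet, let $\varphi:\Sigma^+\to\Sigma^+$ be a Parikh-positive morphism, and let $W=\{\varphi(a_i)\mid 1\leq i\leq n\}$. If $|W|<n$, then $\varphi$ is reducible.
   Context: A morphism $\varphi:\Sigma^+\to\Sigma^+$ satisfies $\varphi(uv)=\varphi(u)\varphi(v)$ (non-empty images); it is Parikh-positive if every letter of $\Sigma$ occurs in $\varphi(a_1)\cdots\varphi(a_n)$. An automorphism is an injective morphism mapping each letter to a single letter. $\varphi$ is reducible if $\varphi=\psi_2\circ\psi_1$ for morphisms $\psi_1,\psi_2:\Sigma^+\to\Sigma^+$ neither of which is an automorphism. *)

(* Defs.v *)
From mathcomp Require Import all_boot.
Set Implicit Arguments. Unset Strict Implicit. Unset Printing Implicit Defensive.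

(* Alphabet Sigma = {a_1,...,a_n} is represented by 'I_n; words are seq 'I_n.
   A morphism Sigma^+ -> Sigma^+ is determined by the images of the letters,
   which must be non-empty words. *)
Definition letter_images (n : nat) := 'I_n -> seq 'I_n.

Definition morph_apply n (f : letter_images n) (w : seq 'I_n) : seq 'I_n :=
  flatten (map f w).

Definition is_morphism n (f : letter_images n) : Prop :=
  forall a : 'I_n, f a <> [::].

Definition parikh_positive n (f : letter_images n) : Prop :=
  forall b : 'I_n, b \in morph_apply f (enum 'I_n).

Definition is_automorphism n (f : letter_images n) : Prop :=
  (forall a : 'I_n, size (f a) = 1) /\
  (forall u v : seq 'I_n, u <> [::] -> v <> [::] ->
     morph_apply f u = morph_apply f v -> u = v).

Definition reducible n (f : letter_images n) : Prop :=
  exists psi1 psi2 : letter_images n,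
    is_morphism psi1 /\ is_morphism psi2 /\
    ~ is_automorphism psi1 /\ ~ is_automorphism psi2 /\
    (forall w : seq 'I_n, w <> [::] ->
       morph_apply f w = morph_apply psi2 (morph_apply psi1 w)).

(* Main.v *)
Require Import Defs.
From mathcomp Require Import all_boot.

Theorem proposition3 (n : nat) (phi : letter_images n) :
  is_morphism phi -> parikh_positive phi ->
  size (undup [seq phi a | a <- enum 'I_n]) < n ->
  reducible phi.
Proof.
move=> Hm _ Hs.
have : ~~ injectiveb phi.
  apply/negP => /injectiveP Hinj.
  move: Hs; rewrite undup_id; first by rewrite size_map size_enum_ord ltnn.
  by rewrite map_inj_uniq // enum_uniq.
case/injectivePn => a [b Hab Heq].
pose g c := odflt a [pick d | phi d == phi c].
have Hg : forall c, phi (g c) = phi c.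
  by move=> c; rewrite /g; case: pickP => [d /eqP|/(_ c)] //; rewrite eqxx.
have Hgab : g a = g b by rewrite /g Heq.
exists (fun c => [:: g c]), phi; split; first by move=> c.
split; first exact: Hm.
split.
  case=> _ H; have := H [:: a] [:: b] ltac:(by []) ltac:(by []).
  rewrite /morph_apply /= Hgab => /(_ erefl) [] Hab'.
  by rewrite Hab' eqxx in Hab.
split.
  case=> _ H; have := H [:: a] [:: b] ltac:(by []) ltac:(by []).
  rewrite /morph_apply /= Heq => /(_ erefl) [] Hab'.
  by rewrite Hab' eqxx in Hab.
move=> w _; rewrite /morph_apply; elim: w => [|c w IH] //=.
by rewrite Hg IH.
Qed.
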